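(* Let $A\neq 1$ and $B\neq 0$ be real constants and let $(x_n)_{n\ge0}$ be the solution of $$x_{n+10}=\frac{x_n}{A+B\,x_nx_{n+2}x_{n+4}x_{n+6}x_{n+8}},\qquad n\ge 0,$$ with initial conditions $x_0,\dots,x_9$. Suppose the initial conditions satisfy $x_0x_1x_2x_3x_4=\frac{1-A}{B}$, $x_i=x_{i+5}$ for $i=0,\dots,4$, and $x_i\neq x_{i+2}$. Then the solution is periodic with period $5$. *)

(* Defs.v *)
From Stdlib Require Import Reals Lra Lia.

(* Main.v *)
Require Import Defs.
From Stdlib Require Import Reals.
From Stdlib Require Import Lra Lia Arith Wf_nat.
Open Scope R_scope.

Lemma per_aux (x : nat -> R) (N : nat) :
  (forall j, (j < N)%nat -> x (j + 5)%nat = x j) ->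
  forall q r, (5 * q + r < N + 5)%nat -> x (5 * q + r)%nat = x r.
Proof.
  intros H q; induction q as [|q IH]; intros r Hr.
  - f_equal; lia.
  - replace (5 * S q + r)%nat with ((5 * q + r) + 5)%nat by lia.
    rewrite H by lia. apply IH; lia.
Qed.

Theorem theorem3 (A B : R) (x : nat -> R)
  (hA : A <> 1) (hB : B <> 0)
  (hrec : forall n : nat,
     x (n + 10)%nat =
       x n / (A + B * x n * x (n + 2)%nat * x (n + 4)%nat * x (n + 6)%nat * x (n + 8)%nat))
  (hprod : x 0%nat * x 1%nat * x 2%nat * x 3%nat * x 4%nat = (1 - A) / B)
  (hper : forall i : nat, (i <= 4)%nat -> x i = x (i + 5)%nat)
  (hne : forall i : nat, (i <= 4)%nat -> x i <> x (i + 2)%nat) :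
  (forall n : nat, x (n + 5)%nat = x n) /\
  (forall p : nat, (0 < p < 5)%nat -> exists n : nat, x (n + p)%nat <> x n).
Proof.
  assert (P : forall n : nat, x (n + 5)%nat = x n).
  { intro n. induction n as [n IH] using (well_founded_induction lt_wf).
    destruct (Nat.le_gt_cases n 4) as [Hn|Hn].
    - symmetry; apply hper; lia.
    - destruct n as [|[|[|[|[|m]]]]]; try lia.
      replace (S (S (S (S (S m)))) + 5)%nat with (m + 10)%nat by lia.
      rewrite hrec.
      assert (IH' : forall j, (j < m + 5)%nat -> x (j + 5)%nat = x j).
      { intros j Hj; apply IH; lia. }
      pose proof (per_aux x (m+5) IH') as Q.
      assert (Hd : A + B * x m * x (m + 2)%nat * x (m + 4)%nat * x (m + 6)%nat
                   * x (m + 8)%nat = 1).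
      { pose proof (Nat.div_mod m 5 ltac:(lia)) as Hm.
        set (q := (m / 5)%nat) in *. set (r := (m mod 5)%nat) in *.
        assert (Hr : (r < 5)%nat) by (apply Nat.mod_upper_bound; lia).
        assert (E : forall i, (i < 9)%nat -> x (m + i)%nat =
                  if (r + i <? 5)%nat then x (r + i)%nat
                  else if (r + i <? 10)%nat then x (r + i - 5)%nat else x (r + i - 10)%nat).
        { intros i Hi.
          destruct (r + i <? 5)%nat eqn:E1;
          [apply Nat.ltb_lt in E1|apply Nat.ltb_ge in E1].
          - rewrite Hm, <- Nat.add_assoc. apply Q. lia.
          - destruct (r + i <? 10)%nat eqn:E2;
            [apply Nat.ltb_lt in E2|apply Nat.ltb_ge in E2].
            + replace (m + i)%nat with (5 * S q + (r + i - 5))%nat by lia.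
              apply Q. lia.
            + replace (m + i)%nat with (5 * S (S q) + (r + i - 10))%nat by lia.
              apply Q. lia. }
        rewrite <- (Nat.add_0_r m) at 1.
        rewrite !E by lia.
        assert (HP : B * (x 0%nat * x 1%nat * x 2%nat * x 3%nat * x 4%nat) = 1 - A)
          by (rewrite hprod; field; auto).
        destruct r as [|[|[|[|[|r]]]]]; try lia; simpl; lra. }
      rewrite Hd. unfold Rdiv. rewrite Rinv_1, Rmult_1_r.
      symmetry. replace (S (S (S (S (S m))))) with (m + 5)%nat by lia.
      apply IH; lia. }
  split; [exact P|].
  intros p Hp.
  pose proof (hne 0%nat ltac:(lia)) as H0. simpl in H0.
  destruct p as [|[|[|[|[|p]]]]]; try lia.
  - destruct (Req_dec (x 1%nat) (x 0%nat)) as [E|E].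
    + exists 1%nat. simpl. intro F. apply H0. congruence.
    + exists 0%nat. simpl. exact E.
  - exists 0%nat. simpl. intro F; apply H0; congruence.
  - exists 0%nat. simpl. pose proof (hne 3%nat ltac:(lia)) as H3. simpl in H3.
    pose proof (P 0%nat) as P0. simpl in P0. rewrite P0 in H3. intro F; apply H3; congruence.
  - pose proof (P 0%nat) as P0. pose proof (P 1%nat) as P1. simpl in P0, P1.
    destruct (Req_dec (x 5%nat) (x 1%nat)) as [E|E].
    + exists 2%nat. simpl. rewrite P1. intro F. apply H0. congruence.
    + exists 1%nat. simpl. exact E.
Qed.
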